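(* Assume (A1), (A2), and that $\{\gamma_n\}_{n\ge1}$ is a deterministic $[0,1)$-valued non-increasing sequence with $\lim\gamma_n=0$ and $\sum_n\gamma_n^2<\infty$. Then for the linearized Wang–Landau algorithm, almost surely, for all $n\ge0$, $$\|\pi_{\theta_n}d\lambda-\pi_{\theta_{n+1}}d\lambda\|_{TV}\le 2d(d-1)\gamma_{n+1},$$ and for every $N\ge0$ and all $n\ge N$, $$\sup_{x\in\mathsf X}\|P_{\theta_n}(x,\cdot)-P_{\theta_{n+1}}(x,\cdot)\|_{TV}\le 4\Big(1+\frac{1}{1-\sup_{j\ge N}\gamma_{j+1}}\Big)\gamma_{n+1}.$$
   Context: Setting: $(\mathsf X,\mathcal X)$ Polish space with Borel $\sigma$-algebra and $\sigma$-finite reference measure $\lambda$; $\pi$ a probability density w.r.t. $\lambda$; $d\ge2$; $\mathsf X_1,\dots,\mathsf X_d$ a measurable partition of $\mathsf X$; $I(x)=i$ iff $x\in\mathsf X_i$; $\theta_\star(i)=\int_{\mathsf X_i}\pi\,d\lambda$; $\Theta=\{\theta\in(0,1)^d:\sum_i\theta(i)=1\}$; $\pi_\theta(x)=\big(\sum_{i}\theta_\star(i)/\theta(i)\big)^{-1}\sum_{i}\frac{\pi(x)}{\theta(i)}\mathbf 1_{\mathsf X_i}(x)$. $\|\mu\|_{TV}=\sup\{|\mu(f)|:\sup|f|\le1\}$. (A1): $0<\inf\pi\le\sup\pi<\infty$ and $\min_i\theta_\star(i)>0$. (A2): $P_\theta$ is the Metropolis–Hastings kernel with target $\pi_\theta\,d\lambda$,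 symmetric proposal density $q$ w.r.t. $\lambda$ with $\inf_{\mathsf X^2}q>0$, acceptance $1\wedge\pi_\theta(y)/\pi_\theta(x)$. Linearized Wang–Landau algorithm: $X_0\in\mathsf X$, $\theta_0\in\Theta$; $X_{n+1}\sim P_{\theta_n}(X_n,\cdot)$ conditionally on $\mathcal F_n=\sigma(\theta_0,X_0,\dots,X_n)$; $\theta_{n+1}=\theta_n+\gamma_{n+1}H(X_{n+1},\theta_n)$ with $H_i(x,\theta)=\theta(i)(\mathbf 1_{\mathsf X_i}(x)-\theta(I(x)))$. *)

(* Defs.v *)
From HB Require Import structures.
From mathcomp Require Import all_boot all_order all_algebra.
From mathcomp Require Import all_classical all_reals all_analysis.
Set Implicit Arguments. Unset Strict Implicit. Unset Printing Implicit Defensive.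
Import Order.TTheory GRing.Theory Num.Theory.
Import numFieldNormedType.Exports.
Local Open Scope classical_set_scope.
Local Open Scope ring_scope.

(* Linearized Wang-Landau: auxiliary definitions.
   k  : number of strata (the paper's d),
   I  : T -> 'I_k the stratum index map (X_i = I @^-1` [set i]). *)

Section WL.
Variables (R : realType) (dT : measure_display) (T : measurableType dT).
Variable (lam : {measure set T -> \bar R}).
Variables (k : nat) (I : T -> 'I_k) (pi : T -> R) (q : T -> T -> R).

Definition theta_star (i : 'I_k) : R := Rintegral lam (I @^-1` [set i]) pi.

Definition in_Theta (th : 'I_k -> R) : Prop :=
  (forall i, 0 < th i < 1) /\ \sum_(i < k) th i = 1.

Definition pi_theta (th : 'I_k -> R) (x : T) : R :=
  (\sum_(i < k) theta_star i / th i)^-1 *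
  \sum_(i < k) (pi x / th i) * (I x == i)%:R.

Definition pi_theta_meas (th : 'I_k -> R) (f : T -> R) : R :=
  Rintegral lam setT (fun y => f y * pi_theta th y).

Definition MH_accept (th : 'I_k -> R) (x y : T) : R :=
  Num.min 1 (pi_theta th y / pi_theta th x).

(* Metropolis-Hastings kernel P_theta with target pi_theta dlam and proposal
   density q, acting on functions:
   P_theta f (x) = int f(y) q(x,y) a(x,y) lam(dy) + f(x) (1 - int q(x,y) a(x,y) lam(dy)),
   i.e. P_theta(x,A) = int_A q a dlam + 1_A(x) (1 - int q a dlam). *)
Definition MH_kernel (th : 'I_k -> R) (x : T) (f : T -> R) : R :=
  Rintegral lam setT (fun y => f y * q x y * MH_accept th x y) +
  f x * (1 - Rintegral lam setT (fun y => q x y * MH_accept th x y)).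

(* Total variation norm of mu1 - mu2 (finite signed measures given through
   their action on functions): sup { |mu1 f - mu2 f| : f measurable, sup|f| <= 1 } *)
Definition TV_dist (mu1 mu2 : (T -> R) -> R) : \bar R :=
  ereal_sup [set (`|mu1 f - mu2 f|)%:E | f in
     [set f : T -> R | measurable_fun setT f /\ forall x, `|f x| <= 1]].

Fixpoint WL_theta (gamma : nat -> R) (th0 : 'I_k -> R) (X : nat -> T) (n : nat)
  : 'I_k -> R :=
  match n with
  | 0 => th0
  | m.+1 => fun i => WL_theta gamma th0 X m i +
       gamma m.+1 * (WL_theta gamma th0 X m i *
          ((I (X m.+1) == i)%:R - WL_theta gamma th0 X m (I (X m.+1))))
  end.

End WL.

Definition WL_filtration (R : realType) (dO : measure_display)
  (Omega : measurableType dO) (dT : measure_display) (T : measurableType dT)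
  (k : nat) (th0 : Omega -> 'I_k -> R) (X : nat -> Omega -> T) (n : nat)
  : set (set Omega) :=
  <<s [set B | (exists m (A : set T), (m <= n)%N /\ measurable A /\ B = X m @^-1` A)
            \/ (exists i (A : set R), measurable A /\ B = (fun w => th0 w i) @^-1` A)] >>.

(* Main.v *)
Require Import Defs.
From HB Require Import structures.
From mathcomp Require Import all_boot all_order all_algebra.
From mathcomp Require Import all_classical all_reals all_analysis.
From mathcomp Require Import ring lra measurable_realfun.
Import Order.TTheory GRing.Theory Num.Theory.
Import numFieldNormedType.Exports.
Local Open Scope classical_set_scope.
Local Open Scope ring_scope.

Lemma final_ineq (R : realType) (A B g al be : R) :
  0 < A -> 0 <= B -> 0 <= g -> 0 < be -> al = be + g -> 1 <= al ->
  A * `|(A+B)^-1 - (A/al+B/be)^-1/al| + B * `|(A+B)^-1 - (A/al+B/be)^-1/be| <= 2*g.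
Proof.
move=> A0 B0 g0 be0 ale al1.
have al0 : 0 < al by lra.
have AB0 : 0 < A + B by lra.
have P0 : 0 < A * be + B * al by nra.
have Q0 : 0 < A/al + B/be.
  by apply: ltr_pwDl; [apply: divr_gt0|apply: divr_ge0; lra].
have e1 : (A+B)^-1 - (A/al+B/be)^-1/al = B*g/((A+B)*(A*be+B*al)).
  rewrite ale; field.
  by rewrite -ale (gt_eqF P0) (gt_eqF AB0) (gt_eqF al0) (gt_eqF be0).
have e2 : (A+B)^-1 - (A/al+B/be)^-1/be = - (A*g/((A+B)*(A*be+B*al))).
  rewrite ale; field.
  by rewrite -ale (gt_eqF P0) (gt_eqF AB0) (gt_eqF al0) (gt_eqF be0).
have PP : 0 < (A+B)*(A*be+B*al) by apply: mulr_gt0.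
rewrite e1 e2 normrN !ger0_norm; last 2 first.
- by apply: divr_ge0 => //; apply: mulr_ge0; lra.
- by apply: divr_ge0 => //; apply: mulr_ge0; lra.
have le1 : A * B / ((A+B)*(A*be+B*al)) <= 1.
  by rewrite ler_pdivrMr // mul1r; nra.
have -> : A * (B * g / ((A + B) * (A * be + B * al))) +
  B * (A * g / ((A + B) * (A * be + B * al))) = 2 * g * (A * B / ((A+B)*(A*be+B*al))).
  by rewrite !mulrA; ring.
by rewrite -[leRHS]mulr1 ler_wpM2l //; lra.
Qed.

Section Meas.
Variables (R : realType) (dT : measure_display) (T : measurableType dT).
Variable (lam : {measure set T -> \bar R}).
Variables (k : nat) (I : T -> 'I_k) (pi : T -> R).


Definition nxt (th : 'I_k -> R) (g : R) (a : 'I_k) : 'I_k -> R :=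
  fun i => th i + g * (th i * ((a == i)%:R - th a)).

Definition Inv (th : 'I_k -> R) := (forall i, 0 < th i) /\ \sum_(i < k) th i = 1.

Lemma sum_ind (th : 'I_k -> R) a : \sum_(i < k) th i * (a == i)%:R = th a.
Proof.
rewrite (bigD1 a) //= eqxx mulr1 big1 ?addr0 // => i /negPf; rewrite eq_sym => ->.
by rewrite mulr0.
Qed.

Lemma Inv_le1 th i : Inv th -> th i <= 1.
Proof.
move=> [pos s]; rewrite -s (bigD1 i) //= lerDl sumr_ge0 // => j _.
exact: ltW.
Qed.

Lemma nxtE th g a i : nxt th g a i = th i * (1 + g * ((a == i)%:R - th a)).
Proof. rewrite /nxt; ring. Qed.

Lemma m_ge th g a i : Inv th -> 0 <= g < 1 ->
  1 - g <= 1 + g * ((a == i)%:R - th a).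
Proof.
move=> Ht /andP[g0 g1]; have := @Inv_le1 th a Ht; have [t0 _] := Ht.
have := t0 a; case: (a == i) => /= ? ?; nra.
Qed.

Lemma Inv_nxt th g a : Inv th -> 0 <= g < 1 -> Inv (nxt th g a).
Proof.
move=> Ht hg; split.
  move=> i; rewrite nxtE; apply: mulr_gt0; first by case: Ht.
  have := @m_ge th g a i Ht hg; case/andP: hg => ? ?; lra.
have [_ s] := Ht.
rewrite /nxt big_split /= s -mulr_sumr.
under eq_bigr do rewrite mulrBr.
rewrite sumrB -mulr_suml s mul1r.
rewrite (eq_bigr (fun i => th i * (a == i)%:R)); last by move=> i _; rewrite mulrC.
by rewrite sum_ind subrr mulr0 addr0.
Qed.


Definition Zt (ts th : 'I_k -> R) := \sum_(i < k) ts i / th i.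
Definition hfun (ts th : 'I_k -> R) (i : 'I_k) := (Zt ts th)^-1 / th i.

Lemma tv_alg ts th g a : Inv th -> 0 <= g < 1 -> (forall i, 0 < ts i) ->
  \sum_(i < k) ts i * `|hfun ts th i - hfun ts (nxt th g a) i| <= 2 * g.
Proof.
move=> Ht hg ts0; have [th0 _] := Ht.
have ta1 := @Inv_le1 th a Ht.
case/andP: hg => g0 g1.
set al := 1 + g * (1 - th a); set be := 1 - g * th a.
have be0 : 0 < be by rewrite /be; nra.
have mE i : nxt th g a i = th i * (if a == i then al else be).
  by rewrite nxtE; case: (a == i) => /=; rewrite /al /be; ring.
set A := ts a / th a; set B := \sum_(i < k | i != a) ts i / th i.
have A0 : 0 < A by apply: divr_gt0.
have B0 : 0 <= B by apply: sumr_ge0 => i _; apply: divr_ge0; apply: ltW.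
have al0 : 0 < al by rewrite /al; nra.
have AB0 : 0 < A + B by lra.
have P0 : 0 < A * be + B * al by nra.
have ZE : Zt ts th = A + B by rewrite /Zt (bigD1 a).
have Z'E : Zt ts (nxt th g a) = A / al + B / be.
  rewrite /Zt (bigD1 a) //= mE eqxx /A invfM mulrA; congr (_ + _).
  rewrite /B mulr_suml; apply: eq_bigr => i ia.
  by rewrite mE eq_sym (negPf ia) invfM mulrA.
have Bsum c : B * c = \sum_(i < k | i != a) ts i / th i * c by rewrite /B mulr_suml.
rewrite (bigD1 a) //= /hfun ZE Z'E mE eqxx.
have -> : \sum_(i < k | i != a) ts i * `|(A + B)^-1 / th i -
     (A / al + B / be)^-1 / nxt th g a i| =
   B * `|(A + B)^-1 - (A / al + B / be)^-1 / be|.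
  rewrite [RHS]Bsum; apply: eq_bigr => i ia.
  rewrite mE eq_sym (negPf ia).
  have ti0 := th0 i.
  have -> : (A + B)^-1 / th i - (A / al + B / be)^-1 / (th i * be) =
     ((A + B)^-1 - (A / al + B / be)^-1 / be) / th i.
    by field; rewrite (gt_eqF ti0) (gt_eqF be0) (gt_eqF al0) (gt_eqF P0) (gt_eqF AB0).
  have : 0 < (th i)^-1 by rewrite invr_gt0.
  move=> /ltW/ger0_norm tn; rewrite normrM tn; ring.
have ta0 := th0 a.
have -> : (A + B)^-1 / th a - (A / al + B / be)^-1 / (th a * al) =
     ((A + B)^-1 - (A / al + B / be)^-1 / al) / th a.
  by field; rewrite (gt_eqF ta0) (gt_eqF be0) (gt_eqF al0) (gt_eqF P0) (gt_eqF AB0).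
have : 0 < (th a)^-1 by rewrite invr_gt0.
move=> /ltW/ger0_norm tn; rewrite normrM tn mulrA -/A.
rewrite mulrAC -/A.
apply: (@final_ineq _ A B g al be A0 B0 g0 be0); rewrite /al /be; [ring | nra].
Qed.

Lemma min_ratio (u r : R) : 0 <= u -> 0 < r ->
  `|Num.min 1 (u * r) - Num.min 1 u| <= `|r - 1|.
Proof.
move=> u0 r0.
have [r1|r1] := leP 1 r.
  rewrite (ger0_norm (_ : 0 <= r - 1)); last by lra.
  by have [u1|u1] := leP 1 u; have [ur|ur] := leP 1 (u * r);
    rewrite ler_norml; apply/andP; split; nra.
rewrite (ler0_norm (_ : r - 1 <= 0)); last by lra.
by have [u1|u1] := leP 1 u; have [ur|ur] := leP 1 (u * r);
  rewrite ler_norml; apply/andP; split; nra.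
Qed.

Lemma mratio th g a i j : Inv th -> 0 <= g < 1 ->
  `|(1 + g * ((a == j)%:R - th a)) / (1 + g * ((a == i)%:R - th a)) - 1| <= g / (1 - g).
Proof.
move=> Ht hg; have mi := @m_ge th g a i Ht hg.
have [t0 _] := Ht; have ta := t0 a; have ta1 := @Inv_le1 th a Ht.
case/andP: hg => g0 g1.
set mj := 1 + g * ((a == j)%:R - th a).
set m := 1 + g * ((a == i)%:R - th a) in mi *.
have m0 : 0 < m by lra.
have -> : mj / m - 1 = (mj - m) / m by field; rewrite gt_eqF.
rewrite normrM (ger0_norm (ltW (_ : 0 < m^-1))); last by rewrite invr_gt0.
apply: (le_trans (y := g / m)).
  apply: ler_wpM2r; first by rewrite invr_ge0 ltW.
  rewrite /mj /m ler_norml; case: (a == i); case: (a == j) => /=;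
    rewrite ?mulr1n ?mulr0n; apply/andP; split; nra.
apply: ler_wpM2l => //; rewrite lef_pV2 ?posrE //; lra.
Qed.


Hypothesis mI : forall i : 'I_k, measurable (I @^-1` [set i]).

Lemma mesI (h : 'I_k -> R) : measurable_fun setT (fun x => h (I x)).
Proof.
move=> _ Y mY; rewrite setTI.
have -> : (fun x => h (I x)) @^-1` Y =
   \bigcup_(i in [set i | Y (h i)]) I @^-1` [set i].
  apply/seteqP; split => x /=.
    by move=> Yx; exists (I x).
  by move=> [i /= Yi ->].
by apply: fin_bigcup_measurable; [exact: finite_finset | move=> i _; exact: mI].
Qed.

Lemma intg_dom (p g : T -> R) (M : R) :
  lam.-integrable setT (EFin \o p) -> measurable_fun setT g ->
  (forall x, `|g x| <= M * p x) -> lam.-integrable setT (EFin \o g).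
Proof.
move=> ip mg gb.
apply: (le_integrable measurableT _ _ (integrableZl measurableT M ip)).
- exact/measurable_EFinP.
move=> x _ /=; rewrite lee_fin.
exact: le_trans (gb x) (ler_norm _).
Qed.

Lemma intg_dens (p : T -> R) : measurable_fun setT p -> (forall x, 0 <= p x) ->
  (\int[lam]_x (p x)%:E = 1)%E -> lam.-integrable setT (EFin \o p).
Proof.
move=> mp p0 ip; apply/integrableP; split; first exact/measurable_EFinP.
under eq_integral do rewrite /= ger0_norm //.
by rewrite ip ltry.
Qed.

Lemma Rint_sum (s : seq 'I_k) (F : 'I_k -> T -> R) :
  (forall i, lam.-integrable setT (EFin \o F i)) ->
  lam.-integrable setT (EFin \o (fun x => \sum_(i <- s) F i x)) /\
  Rintegral lam setT (fun x => \sum_(i <- s) F i x) =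
    \sum_(i <- s) Rintegral lam setT (F i).
Proof.
move=> iF; elim: s => [|j s [ih eh]].
  split.
    apply: (eq_integrable measurableT (cst 0%E)); last exact: integrable0.
    by move=> x _ /=; rewrite big_nil.
  under eq_Rintegral do rewrite big_nil.
  by rewrite Rintegral_cst // mul0r big_nil.
split.
  apply: (eq_integrable measurableT _ _ _ (integrableD measurableT (iF j) ih)).
  by move=> x _ /=; rewrite big_cons EFinD.
under eq_Rintegral do rewrite big_cons.
by rewrite RintegralD // ?eh ?big_cons //; exact: iF.
Qed.


Hypothesis mpi : measurable_fun setT pi.
Hypothesis pi0 : forall x, 0 <= pi x.
Hypothesis ipi : (\int[lam]_x (pi x)%:E = 1)%E.

Lemma ipiI : lam.-integrable setT (EFin \o pi).
Proof. exact: intg_dens. Qed.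

Lemma intg_pi (g : T -> R) (M : R) : measurable_fun setT g ->
  (forall x, `|g x| <= M * pi x) -> lam.-integrable setT (EFin \o g).
Proof. by move=> mg gb; exact: (@intg_dom pi g M ipiI mg gb). Qed.


Lemma tsE i : theta_star lam I pi i = Rintegral lam setT (fun x => pi x * (I x == i)%:R).
Proof.
rewrite /theta_star Rintegral_mkcond; apply: eq_Rintegral => x _.
rewrite patchE; case: (boolP (x \in _)) => hx.
  by move/set_mem: hx => /= ->; rewrite eqxx mulr1.
case: eqP => [e|_]; last by rewrite mulr0.
by exfalso; move/negP: hx; apply; apply/mem_set.
Qed.

Lemma ind_bnd i x : `|pi x * (I x == i)%:R| <= 1 * pi x.
Proof.
rewrite normrM (ger0_norm (pi0 x)) mul1r.
by case: (I x == i); rewrite /= ?normr1 ?normr0 ?mulr1 ?mulr0.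
Qed.

Lemma ind_meas i : measurable_fun setT (fun x => pi x * (I x == i)%:R).
Proof.
by apply: measurable_funM => //; exact: (mesI (fun j => (j == i)%:R)).
Qed.

Lemma int_part (h : 'I_k -> R) :
  Rintegral lam setT (fun x => pi x * h (I x)) = \sum_(i < k) h i * theta_star lam I pi i.
Proof.
have iF : forall i, lam.-integrable setT
    (EFin \o (fun x => h i * (pi x * (I x == i)%:R))).
  move=> i; apply: (@intg_pi _ `|h i|).
    apply: measurable_funM; first exact: measurable_cst.
    exact: ind_meas.
  move=> x; rewrite normrM ler_wpM2l //.
  by have := ind_bnd i x; rewrite mul1r.
have -> : Rintegral lam setT (fun x => pi x * h (I x)) =
    Rintegral lam setT (fun x => \sum_(i < k) h i * (pi x * (I x == i)%:R)).
  apply: eq_Rintegral => x _.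
  rewrite (bigD1 (I x)) //= eqxx mulr1 big1 ?addr0; first by rewrite mulrC.
  by move=> i /negPf; rewrite eq_sym => ->; rewrite !mulr0.
have [_ ->] := Rint_sum (index_enum 'I_k) (fun i x => h i * (pi x * (I x == i)%:R)) iF.
apply: eq_bigr => i _; rewrite RintegralZl ?tsE //.
apply: (@intg_pi _ 1); first exact: ind_meas.
exact: ind_bnd.
Qed.

Lemma pi_thetaE th x : pi_theta lam I pi th x =
   pi x * ((\sum_(i < k) theta_star lam I pi i / th i)^-1 / th (I x)).
Proof.
rewrite /pi_theta.
have -> : \sum_(i < k) pi x / th i * (I x == i)%:R = pi x / th (I x).
  rewrite (bigD1 (I x)) //= ?eqxx ?mulr1 big1 ?addr0 //.
  by move=> i /negPf; rewrite eq_sym => ->; rewrite mulr0.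
by rewrite mulrCA.
Qed.

Lemma hsum_bnd (h : 'I_k -> R) j : `|h j| <= \sum_(i < k) `|h i|.
Proof.
by rewrite (bigD1 j) //= lerDl sumr_ge0.
Qed.

Lemma intg_fph (f : T -> R) (h : 'I_k -> R) : measurable_fun setT f ->
  (forall x, `|f x| <= 1) ->
  lam.-integrable setT (EFin \o (fun y => f y * (pi y * h (I y)))).
Proof.
move=> mf fb; apply: (@intg_pi _ (\sum_(i < k) `|h i|)).
  apply: measurable_funM => //; apply: measurable_funM => //; exact: mesI.
move=> x; rewrite !normrM (ger0_norm (pi0 x)).
have h1 := fb x; have h2 := hsum_bnd h (I x); have h3 := pi0 x.
apply: (le_trans (y := 1 * (pi x * `|h (I x)|))).
  by apply: ler_wpM2r => //; rewrite mulr_ge0.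
by rewrite mul1r mulrC ler_wpM2r.
Qed.

Lemma tv_pi th g a : Inv th -> 0 <= g < 1 -> (forall i, 0 < theta_star lam I pi i) ->
  (TV_dist (pi_theta_meas lam I pi th) (pi_theta_meas lam I pi (nxt th g a))
     <= (2 * g)%:E)%E.
Proof.
move=> Ht hg ts0.
apply/ereal_supP => y [f [mf fb] <-]; rewrite lee_fin.
set ts := theta_star lam I pi.
rewrite /pi_theta_meas.
under eq_Rintegral do rewrite pi_thetaE -/ts -/(Zt ts th) -/(hfun ts th (I _)).
under [X in _ - X]eq_Rintegral do rewrite pi_thetaE -/ts -/(Zt ts _) -/(hfun ts _ (I _)).
rewrite -RintegralB //; try exact: intg_fph.
set hd := fun i => `|hfun ts th i - hfun ts (nxt th g a) i|.
have mD : measurable_fun setT (fun x => f x * (pi x * hfun ts th (I x)) -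
        f x * (pi x * hfun ts (nxt th g a) (I x))).
  by apply: measurable_funB; apply: measurable_funM => //;
    apply: measurable_funM => //; exact: mesI.
have iD : lam.-integrable setT (EFin \o (fun x => f x * (pi x * hfun ts th (I x)) -
        f x * (pi x * hfun ts (nxt th g a) (I x)))).
  apply: (eq_integrable measurableT _ _ _
    (integrableB measurableT (intg_fph f (hfun ts th) mf fb)
                             (intg_fph f (hfun ts (nxt th g a)) mf fb))).
  by move=> x _ /=; rewrite EFinB.
have pw x : `|f x * (pi x * hfun ts th (I x)) -
    f x * (pi x * hfun ts (nxt th g a) (I x))| <= pi x * hd (I x).
  rewrite -!mulrBr normrM normrM (ger0_norm (pi0 x)).
  by apply: ler_piMl => //; rewrite mulr_ge0.
apply: le_trans; first exact: le_normr_Rintegral.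
apply: (le_trans (y := Rintegral lam setT (fun x => pi x * hd (I x)))).
  apply: le_Rintegral => //.
  - apply: (@intg_pi _ (\sum_(i < k) `|hd i|)).
      exact: (measurableT_comp (@normr_measurable R setT) mD).
    move=> x; rewrite normr_id; apply: le_trans (pw x) _.
    rewrite mulrC ler_wpM2r //; exact: le_trans (ler_norm _) (hsum_bnd hd (I x)).
  - apply: (@intg_pi _ (\sum_(i < k) `|hd i|)).
      by apply: measurable_funM => //; exact: mesI.
    move=> x; rewrite normrM (ger0_norm (pi0 x)) mulrC ler_wpM2r //.
    exact: hsum_bnd.
rewrite int_part.
rewrite (eq_bigr (fun i => ts i * hd i)); last by move=> i _; rewrite mulrC.
exact: tv_alg.
Qed.

Hypothesis pipos : forall x, 0 < pi x.
Hypothesis tspos : forall i, 0 < theta_star lam I pi i.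

Lemma Zpos th (x : T) : Inv th -> 0 < \sum_(i < k) theta_star lam I pi i / th i.
Proof.
move=> [t0 _]; rewrite (bigD1 (I x)) //=; apply: ltr_pwDl.
  by apply: divr_gt0.
by apply: sumr_ge0 => i _; apply: divr_ge0; apply: ltW.
Qed.

Lemma pith_pos th x : Inv th -> 0 < pi_theta lam I pi th x.
Proof.
move=> Ht; rewrite pi_thetaE; apply: mulr_gt0 => //; apply: divr_gt0.
  by rewrite invr_gt0; exact: Zpos.
by case: Ht.
Qed.

Lemma acc_diff th g a x y : Inv th -> 0 <= g < 1 ->
  `|MH_accept lam I pi th x y - MH_accept lam I pi (nxt th g a) x y| <= g / (1 - g).
Proof.
move=> Ht hg; have Ht' := Inv_nxt th g a Ht hg.
have [t0 _] := Ht.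
set mx := 1 + g * ((a == I x)%:R - th a).
set my := 1 + g * ((a == I y)%:R - th a).
have mxp : 0 < mx by have := @m_ge th g a (I x) Ht hg; case/andP: hg => ? ?; rewrite -/mx; lra.
have myp : 0 < my by have := @m_ge th g a (I y) Ht hg; case/andP: hg => ? ?; rewrite -/my; lra.
set u := pi_theta lam I pi th y / pi_theta lam I pi th x.
have u0 : 0 <= u by apply: divr_ge0; apply: ltW; apply: pith_pos.
have E : pi_theta lam I pi (nxt th g a) y / pi_theta lam I pi (nxt th g a) x = u * (mx / my).
  rewrite /u !pi_thetaE !nxtE -/mx -/my.
  have Z0 := Zpos th x Ht; have Z0' := Zpos (nxt th g a) x Ht'.
  have tx := t0 (I x); have ty := t0 (I y); have px := pipos x; have py := pipos y.
  set Z := \sum_(i < k) _ in Z0 *; set Z' := \sum_(i < k) _ in Z0' *.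
  by field; rewrite (gt_eqF myp) (gt_eqF tx) (gt_eqF Z0) (gt_eqF px) (gt_eqF ty)
    (gt_eqF mxp) (gt_eqF Z0').
rewrite /MH_accept E distrC.
apply: le_trans (min_ratio u (mx / my) u0 _) _; first by apply: divr_gt0.
exact: mratio.
Qed.

Variable q : T -> T -> R.
Hypothesis mq : measurable_fun setT (fun xy : T * T => q xy.1 xy.2).
Hypothesis iq : forall x, (\int[lam]_y (q x y)%:E = 1)%E.
Hypothesis q0 : forall x y, 0 <= q x y.

Lemma mqx x : measurable_fun setT (q x).
Proof. exact: (measurable_fun_pair2 x mq). Qed.

Lemma iqx x : lam.-integrable setT (EFin \o q x).
Proof. exact: (@intg_dens (q x) (mqx x) (q0 x) (iq x)). Qed.

Lemma Rq x : Rintegral lam setT (q x) = 1.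
Proof. by rewrite /Rintegral iq. Qed.

Lemma mpith th : measurable_fun setT (pi_theta lam I pi th).
Proof.
rewrite (_ : pi_theta lam I pi th = fun y => pi y *
   ((\sum_(i < k) theta_star lam I pi i / th i)^-1 / th (I y))).
  apply: measurable_funM => //; exact: (mesI (fun j => _ / th j)).
by apply/funext => y; rewrite pi_thetaE.
Qed.

Lemma mA th x : measurable_fun setT (MH_accept lam I pi th x).
Proof.
rewrite /MH_accept.
apply: (measurable_minr (measurable_cst _)).
apply: measurable_funM; first exact: mpith.
exact: measurable_cst.
Qed.

Lemma intq_bnd x (F : T -> R) (e : R) : measurable_fun setT F ->
  (forall y, `|F y| <= e * q x y) -> `|Rintegral lam setT F| <= e.
Proof.
move=> mF Fb.
have iF : lam.-integrable setT (EFin \o F) by exact: (@intg_dom (q x) F e (iqx x) mF Fb).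
apply: le_trans; first exact: le_normr_Rintegral.
apply: (le_trans (y := Rintegral lam setT (fun y => e * q x y))).
  apply: le_Rintegral => //.
  - apply: (@intg_dom (q x) _ `|e| (iqx x)).
      exact: (measurableT_comp (@normr_measurable R setT) mF).
    move=> y; rewrite normr_id (le_trans (Fb y)) // ler_wpM2r //.
    exact: ler_norm.
  - apply: (@intg_dom (q x) (fun y => e * q x y) `|e| (iqx x)).
      by apply: measurable_funM => //; exact: mqx.
    by move=> y; rewrite normrM (ger0_norm (q0 x y)).
by rewrite RintegralZl // ?Rq ?mulr1 //; exact: iqx.
Qed.

Lemma A_bnd th x y : Inv th -> 0 <= MH_accept lam I pi th x y <= 1.
Proof.
move=> Ht; rewrite /MH_accept; apply/andP; split.
  rewrite le_min ler01 /=; apply: divr_ge0; apply: ltW; exact: pith_pos.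
by rewrite ge_min lexx.
Qed.

Lemma tv_mh th g a x : Inv th -> 0 <= g < 1 ->
  (TV_dist (MH_kernel lam I pi q th x) (MH_kernel lam I pi q (nxt th g a) x)
     <= (2 * (g / (1 - g)))%:E)%E.
Proof.
move=> Ht hg; have Ht' := Inv_nxt th g a Ht hg.
apply/ereal_supP => z [f [mf fb] <-]; rewrite lee_fin.
set e := g / (1 - g).
have i1 t : Inv t -> lam.-integrable setT
    (EFin \o (fun y => f y * q x y * MH_accept lam I pi t x y)).
  move=> Hti; apply: (@intg_dom (q x) _ 1 (iqx x)).
    apply: measurable_funM; last exact: mA.
    by apply: measurable_funM => //; exact: mqx.
  move=> y; rewrite !normrM (ger0_norm (q0 x y)) mul1r.
  have /andP[A0 A1] := A_bnd t x y Hti; rewrite (ger0_norm A0).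
  apply: le_trans (ler_piMr _ A1) _; first by rewrite mulr_ge0.
  exact: ler_piMl.
have i2 t : Inv t -> lam.-integrable setT
    (EFin \o (fun y => q x y * MH_accept lam I pi t x y)).
  move=> Hti; apply: (@intg_dom (q x) _ 1 (iqx x)).
    by apply: measurable_funM; [exact: mqx | exact: mA].
  move=> y; rewrite !normrM (ger0_norm (q0 x y)) mul1r.
  have /andP[A0 A1] := A_bnd t x y Hti; rewrite (ger0_norm A0).
  exact: ler_piMr.
rewrite /MH_kernel.
set R1 := Rintegral _ _ (fun y => f y * q x y * MH_accept lam I pi th x y).
set R1' := Rintegral _ _ (fun y => f y * q x y * MH_accept lam I pi (nxt th g a) x y).
set R2 := Rintegral _ _ (fun y => q x y * MH_accept lam I pi th x y).
set R2' := Rintegral _ _ (fun y => q x y * MH_accept lam I pi (nxt th g a) x y).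
have -> : R1 + f x * (1 - R2) - (R1' + f x * (1 - R2')) =
   (R1 - R1') - f x * (R2 - R2') by ring.
rewrite /R1 /R1' /R2 /R2' -!RintegralB //; try (apply: i1 || apply: i2); try done.
apply: le_trans; first exact: ler_normB.
have -> : 2 * e = e + 1 * e by ring.
apply: lerD.
  apply: (intq_bnd x).
    by apply: measurable_funB; apply: measurable_funM;
      try (apply: measurable_funM => //; exact: mqx); exact: mA.
  move=> y; rewrite -mulrBr !normrM (ger0_norm (q0 x y)).
  have h := acc_diff th g a x y Ht hg; rewrite -/e in h.
  rewrite -mulrA; apply: le_trans (ler_piMl _ (fb y)) _; first by rewrite mulr_ge0.
  by rewrite mulrC ler_wpM2r.
rewrite normrM; apply: ler_pM => //.
apply: (intq_bnd x).
  by apply: measurable_funB; apply: measurable_funM; try exact: mqx; exact: mA.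
move=> y; rewrite -mulrBr !normrM (ger0_norm (q0 x y)) mulrC ler_wpM2r //.
exact: acc_diff.
Qed.
End Meas.

Theorem mainTheorem14
  (R : realType) (dT : measure_display) (T : measurableType dT)
  (lam : {measure set T -> \bar R}) (k : nat) (I : T -> 'I_k)
  (pi : T -> R) (q : T -> T -> R) (gamma : nat -> R)
  (dO : measure_display) (Omega : measurableType dO) (P : probability Omega R)
  (th0 : Omega -> 'I_k -> R) (X : nat -> Omega -> T) :
  (* setting *)
  sigma_finite setT lam ->
  (2 <= k)%N ->
  (forall i : 'I_k, measurable (I @^-1` [set i])) ->
  measurable_fun setT pi -> (forall x, 0 <= pi x) ->
  (\int[lam]_x (pi x)%:E = 1)%E ->
  (* (A1) *)
  (exists c : R, 0 < c /\ forall x, c <= pi x) ->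
  (exists C : R, forall x, pi x <= C) ->
  (forall i, 0 < theta_star lam I pi i) ->
  (* (A2): symmetric proposal density with positive infimum *)
  measurable_fun setT (fun xy : T * T => q xy.1 xy.2) ->
  (forall x, (\int[lam]_y (q x y)%:E = 1)%E) ->
  (forall x y, q x y = q y x) ->
  (exists c : R, 0 < c /\ forall x y, c <= q x y) ->
  (* step sizes *)
  (forall n, (1 <= n)%N -> 0 <= gamma n < 1) ->
  (forall n, (1 <= n)%N -> gamma n.+1 <= gamma n) ->
  gamma @ \oo --> 0 ->
  cvg (series (fun n => gamma n ^+ 2) @ \oo) ->
  (* the linearized Wang-Landau process *)
  (forall n, measurable_fun setT (X n)) ->
  (forall i, measurable_fun setT (fun w => th0 w i)) ->
  (forall w, in_Theta (th0 w)) ->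
  (forall n (f : T -> R) (B : set Omega),
      measurable_fun setT f -> (forall x, `|f x| <= 1) ->
      WL_filtration th0 X n B ->
      (\int[P]_(w in B) (f (X n.+1 w))%:E =
       \int[P]_(w in B)
          (MH_kernel lam I pi q (WL_theta I gamma (th0 w) (X^~ w) n) (X n w) f)%:E)%E) ->
  {ae P, forall w,
     let theta := WL_theta I gamma (th0 w) (X^~ w) in
     (forall n,
        (TV_dist (pi_theta_meas lam I pi (theta n)) (pi_theta_meas lam I pi (theta n.+1))
         <= (2 * k%:R * (k%:R - 1) * gamma n.+1)%:E)%E) /\
     (forall N n, (N <= n)%N ->
        (ereal_sup [set TV_dist (MH_kernel lam I pi q (theta n) x)
                                (MH_kernel lam I pi q (theta n.+1) x) | x in [set: T]]
         <= (4 * (1 + 1 / (1 - sup [set gamma j.+1 | j in [set j | (N <= j)%N]]))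
               * gamma n.+1)%:E)%E)}.
Proof.
move=> _ k2 mI mpi pi0 ipi [c [c0 cpi]] _ tspos mq iq _ [cq [cq0 cqq]]
  gam gdec _ _ _ _ th0T _.
have pipos : forall x, 0 < pi x by move=> x; exact: lt_le_trans c0 (cpi x).
have q0 : forall x y, 0 <= q x y by move=> x y; exact: le_trans (ltW cq0) (cqq x y).
apply: aeW => w /=.
set theta := WL_theta I gamma (th0 w) (X^~ w).
have gn n : 0 <= gamma n.+1 < 1 by apply: gam.
have thS n : theta n.+1 = nxt R k (theta n) (gamma n.+1) (I (X n.+1 w)) by [].
have Hinv : forall n, Inv R k (theta n).
  elim=> [|n ih].
    by have [h1 h2] := th0T w; split => // i; have /andP[] := h1 i.
  by rewrite thS; apply: Inv_nxt.
split.
  move=> n.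
  rewrite -/(nxt R k (theta n) (gamma n.+1) (I (X n.+1 w))).
  apply: le_trans (tv_pi _ _ _ _ _ _ _ mI mpi pi0 ipi _ _ (I (X n.+1 w)) (Hinv n) (gn n) tspos) _.
  rewrite lee_fin.
  have kk : 2 <= k%:R :> R by rewrite (ler_nat R 2 k).
  have kk2 : 1 <= k%:R * (k%:R - 1) :> R by nra.
  have := gn n; case/andP => g0 _.
  have -> : 2 * k%:R * (k%:R - 1) * gamma n.+1 = 2 * gamma n.+1 * (k%:R * (k%:R - 1)) by ring.
  by rewrite -[X in X <= _]mulr1 ler_wpM2l //; lra.
move=> N n Nn.
apply/ereal_supP => y [x _ <-].
apply: le_trans (tv_mh _ _ _ _ _ _ _ mI mpi pipos tspos _ mq iq q0 _ _ (I (X n.+1 w)) x (Hinv n) (gn n)) _.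
rewrite lee_fin.
set s := sup _.
have gmono : forall m d, (1 <= m)%N -> gamma (m + d)%N <= gamma m.
  move=> m; elim=> [|d ih] m1; first by rewrite addn0.
  by rewrite addnS; apply: le_trans (gdec _ _) (ih m1); rewrite addn_gt0 m1.
have sle : s <= gamma N.+1.
  apply: ge_sup; first by exists (gamma N.+1); exists N => //=.
  move=> z [j /= Nj <-].
  by rewrite -(subnKC Nj) -addSn; apply: gmono.
have gles : gamma n.+1 <= s.
  apply: ub_le_sup; last by exists n.
  exists 1 => z [j _ <-]; have /andP[_ /ltW] := gn j; done.
have [g0 g1] := andP (gn n).
have [_ gN1] := andP (gn N).
set G := gamma n.+1 in g0 g1 gles *.
have s1 : s < 1 by lra.
have t0 : 0 <= (1 - s)^-1 by rewrite invr_ge0; lra.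
have h : G / (1 - G) <= G * (1 - s)^-1.
  apply: ler_wpM2l => //; rewrite lef_pV2 ?posrE; lra.
rewrite div1r; nra.
Qed.
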